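(* Let $X$ be a real Hilbert space, let $m\ge1$ be an integer, $I=\{1,\dots,m\}$, let $(R_i)_{i\in I}$ be operators $X\to X$ and $\beta_i>0$ such that each $R_i$ is $\tfrac1{\beta_i}$-cocoercive. Set $R=R_m\cdots R_1$. Then there exists a nonexpansive $N\colon X\to X$ such that $$R=\beta_m\cdots\beta_1\Big(\tfrac1{1+m}\mathrm{Id}+\tfrac m{1+m}N\Big).$$
   Context: For $\beta>0$, $T\colon X\to X$ is $\tfrac1\beta$-cocoercive if $T=\tfrac\beta2(\mathrm{Id}+N)$ for some nonexpansive ($1$-Lipschitz) $N\colon X\to X$. *)

(* Defs.v *)
From Stdlib Require Import Reals.
Open Scope R_scope.

Record HilbertSpace := {
  hs_car :> Type;
  hs_zero : hs_car;
  hs_add : hs_car -> hs_car -> hs_car;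
  hs_opp : hs_car -> hs_car;
  hs_scal : R -> hs_car -> hs_car;
  hs_inner : hs_car -> hs_car -> R;
  hs_add_assoc : forall x y z, hs_add x (hs_add y z) = hs_add (hs_add x y) z;
  hs_add_comm : forall x y, hs_add x y = hs_add y x;
  hs_add_zero : forall x, hs_add x hs_zero = x;
  hs_add_opp : forall x, hs_add x (hs_opp x) = hs_zero;
  hs_scal_assoc : forall a b x, hs_scal a (hs_scal b x) = hs_scal (a * b) x;
  hs_scal_one : forall x, hs_scal 1 x = x;
  hs_scal_distr_l : forall a x y, hs_scal a (hs_add x y) = hs_add (hs_scal a x) (hs_scal a y);
  hs_scal_distr_r : forall a b x, hs_scal (a + b) x = hs_add (hs_scal a x) (hs_scal b x);
  hs_inner_sym : forall x y, hs_inner x y = hs_inner y x;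
  hs_inner_add_l : forall x y z, hs_inner (hs_add x y) z = hs_inner x z + hs_inner y z;
  hs_inner_scal_l : forall a x y, hs_inner (hs_scal a x) y = a * hs_inner x y;
  hs_inner_pos : forall x, 0 <= hs_inner x x;
  hs_inner_def : forall x, hs_inner x x = 0 -> x = hs_zero;
  hs_complete : forall u : nat -> hs_car,
    (forall eps, 0 < eps -> exists N, forall p q, (N <= p)%nat -> (N <= q)%nat ->
        sqrt (hs_inner (hs_add (u p) (hs_opp (u q))) (hs_add (u p) (hs_opp (u q)))) < eps) ->
    exists l, forall eps, 0 < eps -> exists N, forall n, (N <= n)%nat ->
        sqrt (hs_inner (hs_add (u n) (hs_opp l)) (hs_add (u n) (hs_opp l))) < eps
}.

Arguments hs_zero {h}.
Arguments hs_add {h}.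
Arguments hs_opp {h}.
Arguments hs_scal {h}.
Arguments hs_inner {h}.

Definition hs_sub {X : HilbertSpace} (x y : X) : X := hs_add x (hs_opp y).
Definition hs_norm {X : HilbertSpace} (x : X) : R := sqrt (hs_inner x x).

Definition nonexpansive {X : HilbertSpace} (N : X -> X) : Prop :=
  forall x y, hs_norm (hs_sub (N x) (N y)) <= hs_norm (hs_sub x y).

(* T is (1/beta)-cocoercive: T = (beta/2)(Id + N) with N nonexpansive. *)
Definition cocoercive_inv {X : HilbertSpace} (beta : R) (T : X -> X) : Prop :=
  exists N : X -> X, nonexpansive N /\
    forall x, T x = hs_scal (beta / 2) (hs_add x (N x)).

Fixpoint comp_ops {X : Type} (Rs : nat -> X -> X) (k : nat) : X -> X :=
  match k with
  | O => fun x => x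
  | S k' => fun x => Rs (S k') (comp_ops Rs k' x)
  end.

Fixpoint prod_R (b : nat -> R) (k : nat) : R :=
  match k with
  | O => 1
  | S k' => b (S k') * prod_R b k'
  end.

(* Main.v *)
Require Import Defs.
From Stdlib Require Import Reals Lra Psatz.
Open Scope R_scope.



Section H.
Variable X : HilbertSpace.

Definition Q (u : X) := hs_inner u u.

Lemma inner_add_r (x y z : X) : hs_inner z (hs_add x y) = hs_inner z x + hs_inner z y.
Proof. rewrite hs_inner_sym, hs_inner_add_l, (hs_inner_sym X x), (hs_inner_sym X y). lra. Qed.

Lemma inner_scal_r a (x y : X) : hs_inner y (hs_scal a x) = a * hs_inner y x.
Proof. rewrite hs_inner_sym, hs_inner_scal_l, (hs_inner_sym X x). lra. Qed.

Lemma inner_zero_l (z : X) : hs_inner hs_zero z = 0.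
Proof.
  assert (E := hs_inner_add_l X hs_zero hs_zero z).
  rewrite hs_add_zero in E. lra.
Qed.

Lemma inner_opp_l (x z : X) : hs_inner (hs_opp x) z = - hs_inner x z.
Proof.
  assert (E := hs_inner_add_l X x (hs_opp x) z).
  rewrite hs_add_opp, inner_zero_l in E. lra.
Qed.

Lemma inner_opp_r (x z : X) : hs_inner z (hs_opp x) = - hs_inner z x.
Proof. rewrite hs_inner_sym, inner_opp_l, hs_inner_sym. lra. Qed.

Lemma ext (u v : X) : (forall z, hs_inner u z = hs_inner v z) -> u = v.
Proof.
  intros H.
  assert (E : hs_inner (hs_add u (hs_opp v)) (hs_add u (hs_opp v)) = 0).
  { rewrite hs_inner_add_l, inner_opp_l, H. lra. }
  apply hs_inner_def in E.
  rewrite <- (hs_add_zero X u), <- (hs_add_opp X v), (hs_add_comm X v),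
    hs_add_assoc, E, hs_add_comm, hs_add_zero. reflexivity.
Qed.

Ltac vec := apply ext; intro; unfold hs_sub;
  repeat (rewrite ?hs_inner_add_l, ?hs_inner_scal_l, ?inner_opp_l).

Lemma Q_add (u v : X) : Q (hs_add u v) = Q u + 2 * hs_inner u v + Q v.
Proof. unfold Q. rewrite hs_inner_add_l, !inner_add_r, (hs_inner_sym X v u). lra. Qed.

Lemma Q_scal c (u : X) : Q (hs_scal c u) = c * c * Q u.
Proof. unfold Q. rewrite hs_inner_scal_l, inner_scal_r. lra. Qed.

Lemma Q_sub (u v : X) : Q (hs_sub u v) = Q u - 2 * hs_inner u v + Q v.
Proof.
  unfold Q, hs_sub. rewrite hs_inner_add_l, !inner_add_r, !inner_opp_l, !inner_opp_r, (hs_inner_sym X v u). lra.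
Qed.

Lemma Q_nonneg (u : X) : 0 <= Q u.
Proof. apply hs_inner_pos. Qed.

Lemma norm_le (u v : X) : Q u <= Q v -> hs_norm u <= hs_norm v.
Proof. intros; unfold hs_norm; apply sqrt_le_1_alt; exact H. Qed.

Lemma norm_le_inv (u v : X) : hs_norm u <= hs_norm v -> Q u <= Q v.
Proof.
  unfold hs_norm, Q; intros H.
  pose proof (hs_inner_pos X u); pose proof (hs_inner_pos X v).
  rewrite <- (sqrt_sqrt (hs_inner u u)), <- (sqrt_sqrt (hs_inner v v)) by lra.
  pose proof (sqrt_pos (hs_inner u u)).
  apply Rmult_le_compat; lra.
Qed.



Lemma step (k : R) (a g h : X) : 0 <= k ->
  k * Q g + Q (hs_sub a g) <= k * Q a ->
  Q h + Q (hs_sub g h) <= Q g ->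
  (k + 1) * Q h + Q (hs_sub a h) <= (k + 1) * Q a.
Proof.
  intros hk H1 H2.
  assert (E : hs_sub a h = hs_add (hs_sub a g) (hs_sub g h)) by (vec; lra).
  rewrite E, Q_add.
  set (r1 := hs_sub a g) in *. set (r2 := hs_sub g h) in *.
  pose proof (Q_nonneg h). pose proof (Q_nonneg r1). pose proof (Q_nonneg r2).
  destruct (Req_dec k 0) as [Hk0|Hk0].
  - subst k. assert (HQ0 : Q r1 = 0) by lra.
    assert (Ea : a = hs_add g r1) by (unfold r1; vec; lra).
    assert (Qa : Q a = Q g + 2 * hs_inner g r1 + Q r1) by (rewrite Ea; apply Q_add).
    apply hs_inner_def in HQ0. rewrite HQ0, (hs_inner_sym X g), inner_zero_l in Qa.
    rewrite HQ0, inner_zero_l.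
    assert (Q hs_zero = 0) by (unfold Q; apply inner_zero_l). lra.
  - assert (CS := Q_nonneg (hs_sub r1 (hs_scal k r2))).
    rewrite Q_sub, Q_scal, inner_scal_r in CS.
    apply Rmult_le_reg_l with k; [lra|].
    assert (A1 : (k+1) * (k * Q g + Q r1) <= (k+1) * (k * Q a))
      by (apply Rmult_le_compat_l; lra).
    assert (A2 : k*(k+1) * (Q h + Q r2) <= k*(k+1) * Q g)
      by (apply Rmult_le_compat_l; nra).
    nra.
Qed.

Definition Hop (N : X -> X) (P : R) (u : X) : X :=
  hs_scal (1/2) (hs_add u (hs_scal (1/P) (N (hs_scal P u)))).

Lemma firm (N : X -> X) P u v : 0 < P -> nonexpansive N ->
  Q (hs_sub (Hop N P u) (Hop N P v)) +
  Q (hs_sub (hs_sub u v) (hs_sub (Hop N P u) (Hop N P v))) <= Q (hs_sub u v).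
Proof.
  intros hP hN.
  set (a := hs_sub u v). set (b := hs_sub (N (hs_scal P u)) (N (hs_scal P v))).
  assert (Hb : Q b <= P * P * Q a).
  { unfold b. eapply Rle_trans. apply norm_le_inv, hN.
    assert (hs_sub (hs_scal P u) (hs_scal P v) = hs_scal P a) as ->
      by (unfold a; vec; lra).
    rewrite Q_scal. lra. }
  assert (E1 : hs_sub (Hop N P u) (Hop N P v) =
     hs_scal (1/2) (hs_add a (hs_scal (1/P) b))) by (unfold Hop, a, b; vec; lra).
  assert (E2 : hs_sub a (hs_sub (Hop N P u) (Hop N P v)) =
     hs_scal (1/2) (hs_sub a (hs_scal (1/P) b))) by (unfold Hop, a, b; vec; lra).
  fold a. rewrite E2, E1, !Q_scal, Q_add, Q_sub, !Q_scal, !inner_scal_r.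
  assert (Hb' : (1/P) * (1/P) * Q b <= Q a).
  { apply Rmult_le_reg_l with (P*P); [nra|].
    replace (P * P * (1 / P * (1 / P) * Q b)) with (Q b) by (field; lra). lra. }
  lra.
Qed.

End H.

Ltac vec := apply ext; intro; unfold hs_sub;
  repeat (rewrite ?hs_inner_add_l, ?hs_inner_scal_l, ?inner_opp_l).

Lemma prod_pos (beta : nat -> R) m : (forall i, (1 <= i <= m)%nat -> 0 < beta i) ->
  forall n, (n <= m)%nat -> 0 < prod_R beta n.
Proof.
  intros hb n; induction n; simpl; intros; [lra|].
  apply Rmult_lt_0_compat; [apply hb; lia | apply IHn; lia].
Qed.

Theorem mainTheorem11 (X : HilbertSpace) (m : nat) (Rs : nat -> X -> X)
  (beta : nat -> R) (hm : (1 <= m)%nat)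
  (hbeta : forall i, (1 <= i <= m)%nat -> 0 < beta i)
  (hR : forall i, (1 <= i <= m)%nat -> cocoercive_inv (beta i) (Rs i)) :
  exists N : X -> X, nonexpansive N /\
    forall x, comp_ops Rs m x =
      hs_scal (prod_R beta m)
        (hs_add (hs_scal (1 / (1 + INR m)) x)
                (hs_scal (INR m / (1 + INR m)) (N x))).
Proof.
  assert (IND : forall n, (n <= m)%nat -> exists G : X -> X,
    (forall x, comp_ops Rs n x = hs_scal (prod_R beta n) (G x)) /\
    forall x y, INR n * Q X (hs_sub (G x) (G y)) +
      Q X (hs_sub (hs_sub x y) (hs_sub (G x) (G y))) <= INR n * Q X (hs_sub x y)).
  { induction n; intros hn.
    - exists (fun x => x). split.
      + intros x. simpl. apply ext. intro z. rewrite hs_inner_scal_l. lra.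
      + intros x y. simpl.
        assert (hs_sub (hs_sub x y) (hs_sub x y) = hs_zero) as ->
          by (unfold hs_sub; apply hs_add_opp).
        unfold Q; rewrite inner_zero_l. lra.
    - destruct (IHn ltac:(lia)) as [G [HG1 HG2]].
      destruct (hR (S n) ltac:(lia)) as [N [hN hRN]].
      pose proof (prod_pos beta m hbeta n ltac:(lia)) as hP.
      pose proof (hbeta (S n) ltac:(lia)) as hb.
      set (P := prod_R beta n) in *.
      exists (fun x => Hop X N P (G x)). split.
      + intros x. simpl. rewrite HG1, hRN. fold P. unfold Hop.
        apply ext; intro z.
        repeat (rewrite ?hs_inner_add_l, ?hs_inner_scal_l, ?inner_opp_l).
        field. lra.
      + intros x y. rewrite S_INR.
        apply step with (g := hs_sub (G x) (G y)). apply pos_INR. apply HG2. apply firm; auto.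
  }
  destruct (IND m (le_n m)) as [G [HG1 HG2]].
  set (k := INR m) in *.
  assert (hk : 1 <= k) by (apply (le_INR 1); exact hm).
  exists (fun x => hs_scal (1/k) (hs_sub (hs_scal (k+1) (G x)) x)). split.
  - intros x y. apply norm_le.
    set (a := hs_sub x y). set (g := hs_sub (G x) (G y)).
    set (r := hs_sub a g).
    assert (E1 : hs_sub (hs_scal (1/k) (hs_sub (hs_scal (k+1) (G x)) x))
                        (hs_scal (1/k) (hs_sub (hs_scal (k+1) (G y)) y))
                 = hs_scal (1/k) (hs_sub (hs_scal k g) r))
      by (unfold r, a, g; vec; field; lra).
    assert (E2 : a = hs_add g r) by (unfold r, a, g; vec; lra).
    pose proof (HG2 x y) as H. fold a g r in H. fold a. rewrite E1.
    rewrite E2 in H |- *. rewrite Q_scal, Q_sub, Q_scal, Q_add. try rewrite hs_inner_scal_l.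
    rewrite Q_add in H.
    pose proof (Q_nonneg X r).
    assert (key : k*k*Q X g - 2*(k*hs_inner g r) + Q X r <=
                  k*k*(Q X g + 2*hs_inner g r + Q X r)).
    { assert ((k+1)*((1-k)*Q X r) <= (k+1)*(2*k*hs_inner g r))
        by (apply Rmult_le_compat_l; nra). nra. }
    apply Rmult_le_reg_l with (k*k); [nra|].
    replace (k * k * (1 / k * (1 / k) * (k * k * Q X g - 2 * (k * hs_inner g r) + Q X r)))
      with (k * k * Q X g - 2 * (k * hs_inner g r) + Q X r) by (field; lra).
    exact key.
  - intros x. rewrite HG1. apply ext; intro z.
    repeat (rewrite ?hs_inner_add_l, ?hs_inner_scal_l, ?inner_opp_l); unfold hs_sub;
    repeat (rewrite ?hs_inner_add_l, ?hs_inner_scal_l, ?inner_opp_l).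
    field. lra.
Qed.
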